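(* Let $q\in\,]0,1[$, $\omega\ge 0$, let $I$ be an interval containing $\omega_0:=\omega/(1-q)$, and let $f:I\to\mathbb{R}$ be continuous at $\omega_0$. For $x\in I$ define $F(x):=\int_{\omega_0}^{x}f(t)\,\tilde d_{q,\omega}t$. Then $F$ is continuous at $\omega_0$, and $\tilde D_{q,\omega}[F](x)$ exists for every $x\in I^{q,\omega}$ with $\tilde D_{q,\omega}[F](x)=f(x)$. Conversely, $$\int_a^b\tilde D_{q,\omega}[f](t)\,\tilde d_{q,\omega}t=f(b)-f(a)$$ for all $a,b\in I$.
   Context: $\sigma(t):=qt+\omega$, $\sigma^{-1}(t):=q^{-1}(t-\omega)$, $\sigma^k$ is the $k$-fold composition of $\sigma$, $f^{\sigma^k}:=f\circ\sigma^k$, and $I^{q,\omega}:=\{qt+\omega:t\in I\}$. Hahn symmetric derivative: for $t\in I^{q,\omega}\setminus\{\omega_0\}$, $\tilde D_{q,\omega}[f](t):=\frac{f(\sigma(t))-f(\sigma^{-1}(t))}{\sigma(t)-\sigma^{-1}(t)}$, and $\tilde D_{q,\omega}[f](\omega_0):=f'(\omega_0)$ (classical derivative) provided $f$ is differentiable at $\omega_0$. Hahn symmetric integral: for $x\in I$, $$\int_{\omega_0}^x f(t)\,\tilde d_{q,\omega}t:=\bigl(\sigma^{-1}(x)-\sigma(x)\bigr)\sum_{n=0}^{\infty}q^{2n+1}f(\sigma^{2n+1}(x)),$$ and for $a,b\in I$, $\int_a^b f(t)\,\tilde d_{q,\omega}t:=\int_{\omega_0}^b f(t)\,\tilde d_{q,\omega}t-\int_{\omega_0}^a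 f(t)\,\tilde d_{q,\omega}t$, provided the series converge at $x=a$ and $x=b$. *)

(* Defs.v *)
From HB Require Import structures.
From mathcomp Require Import all_boot all_order all_algebra.
From mathcomp Require Import all_classical all_reals all_analysis.
Set Implicit Arguments. Unset Strict Implicit. Unset Printing Implicit Defensive.
Import Order.TTheory GRing.Theory Num.Theory.
Import numFieldNormedType.Exports.
Local Open Scope classical_set_scope.
Local Open Scope ring_scope.

Section Hahn.
Variable R : realType.

Definition hsigma (q w t : R) : R := q * t + w.
Definition hsigma_inv (q w t : R) : R := q^-1 * (t - w).
Definition hsigma_iter (q w : R) (k : nat) (t : R) : R := iter k (hsigma q w) t.
Definition homega0 (q w : R) : R := w / (1 - q).
Definition hImage (q w : R) (I : set R) : set R := hsigma q w @` I.

Definition hint_term (q w : R) (f : R -> R) (x : R) (n : nat) : R :=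
  q ^+ (2 * n + 1) * f (hsigma_iter q w (2 * n + 1) x).

Definition hint0_exists (q w : R) (f : R -> R) (x : R) : Prop :=
  cvgn (series (hint_term q w f x)).

(* int_{omega_0}^x f(t) d~_{q,omega} t
   = (sigma^{-1}(x) - sigma(x)) * sum_{n>=0} q^{2n+1} f(sigma^{2n+1}(x))
   (meaningful when hint0_exists holds) *)
Definition hint0 (q w : R) (f : R -> R) (x : R) : R :=
  (hsigma_inv q w x - hsigma q w x) * limn (series (hint_term q w f x)).

Definition hint (q w : R) (f : R -> R) (a b : R) : R :=
  hint0 q w f b - hint0 q w f a.

Definition hsymq (q w : R) (f : R -> R) (t : R) : R :=
  (f (hsigma q w t) - f (hsigma_inv q w t)) /
  (hsigma q w t - hsigma_inv q w t).

Definition hdq0 (q w : R) (f : R -> R) (x : R) : R :=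
  (f x - f (homega0 q w)) / (x - homega0 q w).

Definition hat0 (q w : R) (I : set R) :=
  within [set x | I x /\ x != homega0 q w] (nbhs (homega0 q w)).

(* "D~_{q,omega}[f](t) exists and equals l": for t <> omega_0 this is the
   symmetric difference quotient; at omega_0 it is the classical derivative
   of f (on I) at omega_0. *)
Definition is_hsymD (q w : R) (I : set R) (f : R -> R) (t l : R) : Prop :=
  if t == homega0 q w then hdq0 q w f x @[x --> hat0 q w I] --> l
  else hsymq q w f t = l.

(* D~_{q,omega}[f] as a total function (at omega_0: the limit of the
   classical difference quotient, an arbitrary value if it does not exist) *)
Definition hsymD (q w : R) (I : set R) (f : R -> R) (t : R) : R :=
  if t == homega0 q w then lim (hdq0 q w f x @[x --> hat0 q w I])
  else hsymq q w f t.

End Hahn.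

(* Main.v *)
Require Import Defs.
From HB Require Import structures.
From mathcomp Require Import all_boot all_order all_algebra.
From mathcomp Require Import all_classical all_reals all_analysis.
From mathcomp Require Import ring lra zify.
Import Order.TTheory GRing.Theory Num.Theory.
Import numFieldNormedType.Exports.
Local Open Scope classical_set_scope.
Local Open Scope ring_scope.
Lemma dom_series (R : realType) (u v : R ^nat) :
  (forall n, `|u n| <= v n) -> cvgn (series v) ->
  cvgn (series u) /\ `|limn (series u)| <= limn (series v).
Proof.
move=> uv cv.
have cn : cvgn [normed series u].
  apply: (series_le_cvg _ _ uv cv) => n //; exact: (le_trans _ (uv n)).
split; first exact: normed_cvg.
apply: le_trans (lim_series_norm cn) _.
by apply: lim_series_le.
Qed.

Lemma geom_odd (R : realType) (q : R) : 0 < q < 1 ->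
  series (fun n : nat => q ^+ (2 * n + 1)) @ \oo --> q / (1 - q ^+ 2).
Proof.
move=> /andP[q0 q1].
have -> : (fun n : nat => q ^+ (2 * n + 1)) = geometric q (q ^+ 2).
  by apply/funext => n /=; rewrite addn1 exprS exprM.
apply: cvg_geometric_series.
rewrite ger0_norm ?exprn_ge0 ?ltW //; nra.
Qed.
Section S.
Variable R : realType.
Variables q w : R.
Hypothesis hq : 0 < q < 1.
Let c := homega0 q w.

Lemma q0 : 0 < q. Proof. by case/andP: hq. Qed.
Lemma q1 : q < 1. Proof. by case/andP: hq. Qed.
Lemma qn0 : q != 0. Proof. by rewrite gt_eqF // q0. Qed.
Lemma qsub : 1 - q != 0. Proof. by rewrite subr_eq0 eq_sym lt_eqF // q1. Qed.

Lemma hsE t : hsigma q w t = q * (t - c) + c.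
Proof. rewrite /hsigma /c /homega0. have := qsub. move=> h. field. exact h. Qed.

Lemma hsiE t : hsigma_inv q w t = (t - c) / q + c.
Proof. rewrite /hsigma_inv /c /homega0. have := qsub; have := qn0 => h1 h2. field. by rewrite h1 h2. Qed.

Lemma iterE k t : hsigma_iter q w k t = q ^+ k * (t - c) + c.
Proof.
elim: k => [|k IH]; first by rewrite /hsigma_iter /= expr0 mul1r subrK.
rewrite /hsigma_iter iterS -/(hsigma_iter q w k t) hsE IH exprS. ring.
Qed.

Lemma iter_in (I : set R) x k : is_interval I -> I c -> I x -> I (hsigma_iter q w k x).
Proof.
move=> hI hc hx; rewrite iterE.
have qk0 : 0 <= q ^+ k by rewrite exprn_ge0 // ltW // q0.
have qk1 : q ^+ k <= 1 by rewrite exprn_ile1 // ltW ?q0 ?q1.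
have [xc|cx] := leP x c.
- apply: (hI x c hx hc); apply/andP; split; nra.
- apply: (hI c x hc hx); apply/andP; split; nra.
Qed.

Let Q := q / (1 - q ^+ 2).

Lemma lemA (f : R -> R) (x M : R) :
  (forall k, `|f (hsigma_iter q w k x) - f c| <= M) ->
  hint0_exists q w f x /\
  `|limn (series (hint_term q w f x)) - f c * Q| <= M * Q.
Proof.
move=> hM.
pose g := (fun n : nat => q ^+ (2 * n + 1)).
pose d := (fun n : nat => q ^+ (2 * n + 1) * (f (hsigma_iter q w (2 * n + 1) x) - f c)).
have gQ := @geom_odd R q hq.
have cg : cvgn (series g) by apply/cvg_ex; exists Q.
have Mg : cvgn (series (M *: g)) by apply: is_cvg_seriesZ.
have Fg : cvgn (series (f c *: g)) by apply: is_cvg_seriesZ.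
have hd : forall n, `|d n| <= (M *: g) n.
  move=> n; have qg : 0 <= q ^+ (2 * n + 1) by rewrite exprn_ge0 // ltW // q0.
  rewrite /d /g normrM (ger0_norm qg).
  have -> : (M *: g) n = M * g n by []. rewrite /g mulrC. have := hM (2 * n + 1)%N. nra.
have [cd ld] := @dom_series R _ _ hd Mg.
have E : hint_term q w f x = f c *: g + d.
  apply/funext => n; have -> : (f c *: g + d) n = f c * g n + d n by []. rewrite /hint_term /d /g; ring.
have lg : limn (series g) = Q by apply: cvg_lim.
split. rewrite /hint0_exists E; apply: is_cvg_seriesD => //.
rewrite E lim_seriesD // lim_seriesZ // lg.
rewrite lim_seriesZ // lg in ld.
by rewrite addrC addKr.
Qed.


Variables (I : set R) (f : R -> R).
Hypothesis hI : is_interval I.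
Hypothesis hc : I c.
Hypothesis hf : f @ within I (nbhs c) --> f c.

Lemma contE (e : R) : 0 < e ->
  exists2 d, 0 < d & forall y, I y -> `|c - y| < d -> `|f c - f y| < e.
Proof.
move=> e0; have := cvgr_dist_lt _ _ hf _ e0.
move=> /(_ (within_filter _ _)); rewrite near_withinE => /nbhs_ballP [d d0 H]; exists d => // y Iy cy.
by apply: H.
Qed.

Lemma unifE (e : R) : 0 < e ->
  exists2 d, 0 < d & forall x, I x -> `|x - c| < d ->
     forall k, `|f (hsigma_iter q w k x) - f c| < e.
Proof.
move=> e0; have [d d0 H] := @contE e e0; exists d => // x Ix xc k.
rewrite distrC; apply: H; first exact: iter_in.
rewrite iterE (_ : c - (q ^+ k * (x - c) + c) = - (q ^+ k * (x - c))); last by ring.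
rewrite normrN normrM.
have qk0 : 0 <= q ^+ k by rewrite exprn_ge0 // ltW // q0.
have qk1 : q ^+ k <= 1 by rewrite exprn_ile1 // ltW ?q0 ?q1.
rewrite ger0_norm //.
have := normr_ge0 (x - c); nra.
Qed.

Lemma evE (x e : R) : I x -> 0 < e ->
  exists N, forall k, (N <= k)%N -> `|f (hsigma_iter q w k x) - f c| < e.
Proof.
move=> Ix e0; have [d d0 H] := @contE e e0.
have hx := normr_ge0 (x - c).
have d1 : 0 < d / (`|x - c| + 1) by apply: divr_gt0 => //; lra.
have qa : `|q| < 1 by rewrite ger0_norm ?ltW ?q0 // q1.
have [N _ HN] := cvgr_dist_lt _ _ (cvg_expr qa) _ d1.
exists N => k kN; rewrite distrC; apply: H; first exact: iter_in.
have := HN k kN; rewrite /= sub0r normrN.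
rewrite iterE (_ : c - (q ^+ k * (x - c) + c) = - (q ^+ k * (x - c))); last by ring.
rewrite normrN normrM.
move=> hk.
have qk0 : 0 <= `|q ^+ k| by [].
rewrite ltr_pdivlMr in hk; last lra.
nra.
Qed.


Lemma boundE (x : R) : I x -> exists M : R, forall k, `|f (hsigma_iter q w k x) - f c| <= M.
Proof.
move=> Ix; have [N HN] := @evE x 1 Ix ltr01.
exists (1 + \sum_(i < N) `|f (hsigma_iter q w i x) - f c|) => k.
have s0 : 0 <= \sum_(i < N) `|f (hsigma_iter q w i x) - f c| by apply: sumr_ge0.
have [kN|Nk] := ltnP k N; last first.
  by have := HN k Nk; lra.
rewrite (bigD1 (Ordinal kN)) //=.
have : 0 <= \sum_(i < N | i != Ordinal kN) `|f (hsigma_iter q w i x) - f c| by apply: sumr_ge0.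
lra.
Qed.

Lemma part1 (x : R) : I x -> hint0_exists q w f x.
Proof. by move=> /boundE [M HM]; case: (@lemA _ _ _ HM). Qed.

Let K := q^-1 - q.
Let S x := limn (series (hint_term q w f x)).

Lemma hint0E (g : R -> R) x : hint0 q w g x = (x - c) * K * limn (series (hint_term q w g x)).
Proof. rewrite /hint0 hsE hsiE /K; have := qn0 => h; field. exact h. Qed.

Lemma KQ : K * Q = 1.
Proof.
rewrite /K /Q; have := qn0 => h; have h2 : 1 - q ^+ 2 != 0.
  rewrite subr_eq0 eq_sym; apply/negP => /eqP h3. have := q0; have := q1; nra.
field; by rewrite h h2.
Qed.

Lemma K0 : 0 < K.
Proof.
have -> : K = (1 - q ^+ 2) / q by rewrite /K; have := qn0 => h; field.
apply: divr_gt0; last exact: q0. have := q0; have := q1; nra.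
Qed.


Lemma hint0c (g : R -> R) : hint0 q w g c = 0.
Proof. by rewrite hint0E subrr !mul0r. Qed.

Lemma Q0 : 0 < Q.
Proof. apply: divr_gt0; first exact: q0. have := q0; have := q1; nra. Qed.

Lemma Sbound (s M : R) : `|s - f c * Q| <= M * Q -> K * `|s| <= `|f c| + M.
Proof.
move=> h; have := ler_normD (s - f c * Q) (f c * Q); rewrite subrK normrM (gtr0_norm Q0) => h2.
have h3 : `|s| <= (`|f c| + M) * Q by lra.
have := ler_wpM2l (ltW K0) h3.
by rewrite [K * (_ * Q)]mulrC -mulrA (mulrC Q) KQ mulr1.
Qed.

Lemma part2 : hint0 q w f @ within I (nbhs c) --> hint0 q w f c.
Proof.
rewrite hint0c; apply/cvgrPdist_lt => e e0.
have [d1 d10 H1] := @unifE 1 ltr01.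
have B0 : 0 < `|f c| + 1 by have := normr_ge0 (f c); lra.
rewrite near_withinE; apply/nbhs_ballP.
exists (Order.min d1 (e / (`|f c| + 1))); first by rewrite /= lt_min d10 divr_gt0.
move=> t; rewrite /ball /= lt_min => /andP[t1 t2] It.
have t1' : `|t - c| < d1 by rewrite distrC.
have [_ hS] := @lemA _ _ _ (fun k => ltW (H1 t It t1' k)).
have := @Sbound _ _ hS.
rewrite sub0r normrN hint0E normrM normrM (gtr0_norm K0).
rewrite distrC in t2; rewrite ltr_pdivlMr // in t2.
have := normr_ge0 (t - c); have := normr_ge0 (limn (series (hint_term q w f t))).
nra.
Qed.


Lemma part3c : hdq0 q w (hint0 q w f) x @[x --> hat0 q w I] --> f c.
Proof.
apply/cvgrPdist_lt => e e0.
have e2 : 0 < e / 2 by rewrite divr_gt0.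
have [d1 d10 H1] := @unifE (e / 2) e2.
rewrite /hat0 near_withinE; apply/nbhs_ballP; exists d1 => // t.
rewrite /ball /= => t1 [It tc].
have t1' : `|t - c| < d1 by rewrite distrC.
have [_ hS] := @lemA _ _ _ (fun k => ltW (H1 t It t1' k)).
rewrite /hdq0 -/c hint0c subr0 hint0E.
set s := limn _ in hS *.
have tc' : t - c != 0 by rewrite subr_eq0.
have -> : (t - c) * K * s / (t - c) = K * s by field.
have -> : f c - K * s = K * (f c * Q - s).
  by rewrite mulrBr mulrCA KQ mulr1.
rewrite normrM (gtr0_norm K0) distrC.
have := ler_wpM2l (ltW K0) hS.
move=> h; rewrite [K * (_ * Q)]mulrCA KQ mulr1 in h.
have := K0; lra.
Qed.


Lemma shiftS (u : R ^nat) (L : R) : series u @ \oo --> L ->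
  series (fun n => u n.+1) @ \oo --> L - u 0%N.
Proof.
move=> hu.
have -> : series (fun n => u n.+1) = (fun n => series u n.+1 - u 0%N).
  apply/funext => n; rewrite !seriesEord /= big_ord_recl /=.
  by rewrite addrC addKr.
apply: cvgB; last exact: cvg_cst.
by rewrite (cvg_shiftS (fun n => series u n)).
Qed.

Lemma hsinv y : hsigma_inv q w (hsigma q w y) = y.
Proof. rewrite /hsigma_inv /hsigma; have := qn0 => h; field. exact h. Qed.

Lemma part3nc (x : R) : hImage q w I x -> x != c -> hsymq q w (hint0 q w f) x = f x.
Proof.
case=> y Iy <- xc.
have cy := @part1 y Iy.
set L := limn (series (hint_term q w f y)).
have hL : series (hint_term q w f y) @ \oo --> L by exact: cy.
have term : hint_term q w f (hsigma q w (hsigma q w y)) =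
    (fun n => q^-2 * hint_term q w f y n.+1).
  apply/funext => n; rewrite /hint_term /hsigma_iter.
  rewrite -iterSr -iterSr.
  have -> : (2 * n.+1 + 1 = (2 * n + 1).+2)%N by rewrite mulnS; lia.
  rewrite mulrA; congr (_ * _).
  rewrite !exprS; move: (q ^+ (2 * n + 1)) => t; have := qn0 => h; field; exact h.
have hS2 : limn (series (hint_term q w f (hsigma q w (hsigma q w y)))) =
    q^-2 * (L - q * f (hsigma q w y)).
  apply: cvg_lim => //; rewrite term.
  have -> : (fun n => q^-2 * hint_term q w f y n.+1) = q^-2 *: (fun n => hint_term q w f y n.+1) by [].
  rewrite seriesZ; apply: cvgZr.
  have -> : q * f (hsigma q w y) = hint_term q w f y 0%N by rewrite /hint_term expr1.
  exact: shiftS.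
rewrite /hsymq hsinv !hint0E hS2 -/L.
have yc : y - c != 0.
  apply: contraNneq xc => h; rewrite hsE h mulr0 add0r //.
have den : hsigma q w (hsigma q w y) - y = (y - c) * (q ^+ 2 - 1).
  rewrite !hsE; ring.
rewrite den.
move: (f (hsigma q w y)) => fx.
rewrite !hsE /K.
have h2 : q ^+ 2 - 1 != 0.
  rewrite subr_eq0; apply/negP => /eqP h3. have := q0; have := q1; nra.
have := qn0 => h.
field.
by rewrite h yc h2.
Qed.


Lemma iter_c k : hsigma_iter q w k c = c.
Proof. by rewrite iterE subrr mulr0 add0r. Qed.

Lemma part4 (x : R) : I x ->
  hint0_exists q w (hsymD q w I f) x /\ hint0 q w (hsymD q w I f) x = f x - f c.
Proof.
move=> Ix; have [->|xc] := eqVneq x c.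
  split; last by rewrite hint0c subrr.
  pose g := (fun n : nat => q ^+ (2 * n + 1)).
  have cg : cvgn (series g) by apply/cvg_ex; exists Q; exact: (@geom_odd R q hq).
  rewrite /hint0_exists.
  have -> : hint_term q w (hsymD q w I f) c = hsymD q w I f c *: g.
    by apply/funext => n; rewrite /hint_term iter_c mulrC.
  exact: is_cvg_seriesZ.
pose a := x - c.
have a0 : a != 0 by rewrite subr_eq0.
pose v := (fun n : nat => f (hsigma_iter q w (2 * n) x)).
have qq : q - q^-1 != 0.
  have -> : q - q^-1 = - K by rewrite /K opprB.
  by rewrite oppr_eq0 gt_eqF // K0.
have qq2 : q * q - 1 != 0.
  apply/negP => /eqP h; have := q0; have := q1; nra.
have term : hint_term q w (hsymD q w I f) x = (a * (q - q^-1))^-1 *: telescope v.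
  apply/funext => n.
  have -> : ((a * (q - q^-1))^-1 *: telescope v) n = (a * (q - q^-1))^-1 * (v n.+1 - v n) by [].
  rewrite /hint_term /hsymD.
  set t := hsigma_iter q w (2 * n + 1) x.
  have qk : q ^+ (2 * n + 1) != 0 by rewrite expf_neq0 // qn0.
  have tc : t != c.
    rewrite /t iterE; apply/negP => /eqP h.
    have : q ^+ (2 * n + 1) * a = 0 by rewrite /a; lra.
    by apply/eqP; rewrite mulf_eq0 negb_or qk a0.
  rewrite (negbTE tc) /hsymq.
  have e3 : hsigma q w t - hsigma_inv q w t = q ^+ (2 * n + 1) * a * (q - q^-1).
    rewrite hsE hsiE /t iterE /a; have := qn0 => h; field; exact h.
  have e1 : hsigma q w t = hsigma_iter q w (2 * n.+1) x.
    rewrite /t /hsigma_iter (_ : (2 * n.+1 = (2 * n + 1).+1)%N) ?iterS //; lia.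
  have e2 : hsigma_inv q w t = hsigma_iter q w (2 * n) x.
    by rewrite /t /hsigma_iter addn1 iterS hsinv.
  rewrite e3 e1 e2 -/(v n.+1) -/(v n).
  move: (v n.+1) (v n) => v1 v0.
  field; by rewrite qn0 qq2 a0 qk.
have hv : v @ \oo --> f c.
  apply/cvgrPdist_lt => e e0; have [N HN] := @evE x e Ix e0.
  exists N => // n /= nN; rewrite distrC; apply: HN; lia.
have hs : series (hint_term q w (hsymD q w I f) x) @ \oo -->
    (a * (q - q^-1))^-1 * (f c - f x).
  rewrite term seriesZ telescopeK; apply: cvgZr.
  have -> : f x = v 0%N by rewrite /v /hsigma_iter muln0.
  by apply: cvgB => //; exact: cvg_cst.
split; first by apply/cvg_ex; eexists; exact: hs.
rewrite hint0E (cvg_lim _ hs) // -/a /K.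
field; by rewrite qn0 qq2 a0.
Qed.

End S.

Theorem theorem2p13 (R : realType) (q w : R) (I : set R) (f : R -> R) :
  0 < q < 1 -> 0 <= w ->
  is_interval I -> I (homega0 q w) ->
  f @ within I (nbhs (homega0 q w)) --> f (homega0 q w) ->
  (* F(x) := int_{omega_0}^x f is well defined on I *)
  (forall x, I x -> hint0_exists q w f x) /\
  (* F is continuous at omega_0 (as a function on I) *)
  (hint0 q w f @ within I (nbhs (homega0 q w)) --> hint0 q w f (homega0 q w)) /\
  (* D~[F](x) exists and equals f(x) on I^{q,omega} *)
  (forall x, hImage q w I x -> is_hsymD q w I (hint0 q w f) x (f x)) /\
  (* converse: int_a^b D~[f] = f(b) - f(a) *)
  (forall a b, I a -> I b ->
     hint0_exists q w (hsymD q w I f) a /\ hint0_exists q w (hsymD q w I f) b /\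
     hint q w (hsymD q w I f) a b = f b - f a).
Proof.
move=> hq _ hI hc hf.
split; first exact: (@part1 _ _ _ hq _ _ hI hc hf).
split; first exact: (@part2 _ _ _ hq _ _ hI hc hf).
split.
  move=> x hx; rewrite /is_hsymD; case: ifP => [/eqP xc|/negbT xc].
    rewrite xc; exact: (@part3c _ _ _ hq _ _ hI hc hf).
  exact: (@part3nc _ _ _ hq _ _ hI hc hf x hx xc).
move=> a b Ia Ib.
have [ea va] := @part4 _ _ _ hq _ _ hI hc hf a Ia.
have [eb vb] := @part4 _ _ _ hq _ _ hI hc hf b Ib.
split => //; split => //.
rewrite /hint va vb; ring.
Qed.
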